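(* Let $A \in \mathbb{C}^{n\times n}$ and let $f(z)=\det(zI-A)$. Let $(\Gamma)$ be a closed piecewise $C^1$ Jordan curve in $\mathbb{C}$ containing no eigenvalue of $A$, and fix an origin $z_0\in(\Gamma)$. Let $\arg_0$ denote the continuous determination of the argument of $f$ along $(\Gamma)$ (i.e. the branch of $\arg(f(z))$, $z\in(\Gamma)$, obtained by continuously following $z$ along $(\Gamma)$) normalized by $\arg_0(f(z_0))=\mathrm{Arg}(f(z_0))$. For $z$ not an eigenvalue of $A$ let $R(z)=(zI-A)^{-1}$ and $\Phi_z(s)=\det(I+sR(z))$. Let $z$ and $h$ be such that the segment $[z,z+h]\subset(\Gamma)$. If $$|\mathrm{Arg}(\Phi_z(s))|<\pi \quad \text{for all } s\in[0,h]$$ (where $s\in[0,h]$ means $s=th$, $t\in[0,1]$), then $$\arg_0(f(z+h))=\arg_0(f(z))+\mathrm{Arg}(\Phi_z(h)).$$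
   Context: $\mathrm{Arg}(w)\in(-\pi,\pi]$ denotes the principal determination of the argument of a nonzero complex number $w$. Note that $f(z+h)=f(z)\,\Phi_z(h)$. *)

(* Defs.v *)
From HB Require Import structures.
From mathcomp Require Import all_boot all_order all_algebra.
From mathcomp Require Import complex.
From mathcomp Require Import all_classical all_reals all_analysis.
Import numFieldNormedType.Exports.
Set Implicit Arguments. Unset Strict Implicit. Unset Printing Implicit Defensive.
Import Order.TTheory GRing.Theory Num.Theory.
Local Open Scope ring_scope.
Local Open Scope classical_set_scope.
Local Open Scope complex_scope.

Section Defs.
Variable R : realType.
Local Notation C := R[i].

Definition cmod (w : C) : R := Num.sqrt (complex.Re w ^+ 2 + complex.Im w ^+ 2).

(* principal determination of the argument, with values in (-pi, pi]
   (for w <> 0). *)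
Definition Arg (w : C) : R :=
  if 0 <= complex.Im w then acos (complex.Re w / cmod w)
  else - acos (complex.Re w / cmod w).

Definition charf n (A : 'M[C]_n) (z : C) : C := \det (z%:M - A).

Definition resolv n (A : 'M[C]_n) (z : C) : 'M[C]_n := invmx (z%:M - A).

Definition Phi n (A : 'M[C]_n) (z s : C) : C := \det (1%:M + s *: resolv A z).

Definition C1fun (g : R -> R) : Prop :=
  (forall x : R, derivable g x 1) /\ continuous (fun x : R => (g^`()) x).

Definition C1_on (gamma : R -> C) (a b : R) : Prop :=
  exists gr gi : R -> R, C1fun gr /\ C1fun gi /\
    forall t, a <= t <= b -> gamma t = gr t +i* gi t.

Definition piecewise_C1 (gamma : R -> C) : Prop :=
  exists s : seq R,
    [/\ sorted <%R (0 :: rcons s 1),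
        (forall x, x \in s -> 0 < x < 1) &
        forall j, (j < (size s).+1)%N ->
          C1_on gamma (nth 0 (0 :: rcons s 1) j) (nth 0 (0 :: rcons s 1) j.+1)].

Definition jordan_curve (gamma : R -> C) : Prop :=
  [/\ piecewise_C1 gamma,
      gamma 0 = gamma 1 &
      {in `[0, 1[ &, injective gamma}].

Definition cont_arg (F : C -> C) (gamma : R -> C) (theta : R -> R) : Prop :=
  {within `[0, 1], continuous theta} /\
  forall t, 0 <= t <= 1 ->
    F (gamma t) = (cmod (F (gamma t)) * cos (theta t)) +i*
                  (cmod (F (gamma t)) * sin (theta t)).

End Defs.

(* Main.v *)
Require Import Defs.
From HB Require Import structures.
From mathcomp Require Import all_boot all_order all_algebra.
From mathcomp Require Import complex.
From mathcomp Require Import all_classical all_reals all_analysis.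
From mathcomp Require Import ring lra.
Import numFieldNormedType.Exports.
Set Implicit Arguments. Unset Strict Implicit. Unset Printing Implicit Defensive.
Import Order.TTheory GRing.Theory Num.Theory.
Local Open Scope ring_scope.
Local Open Scope classical_set_scope.
Local Open Scope complex_scope.

Section S.
Variable R : realType.
Local Notation C := R[i].

Lemma charf_neq0 n (A : 'M[C]_n) w : ~~ eigenvalue A w -> charf A w != 0.
Proof.
rewrite /eigenvalue /eigenspace negbK kermx_eq0 row_free_unit unitmxE unitfE.
rewrite /charf -opprB.
by rewrite -scaleN1r detZ mulf_eq0 negb_or expf_eq0 oppr_eq0 oner_eq0 andbF => /andP[].
Qed.

Lemma charf_factor n (A : 'M[C]_n) w s : charf A w != 0 ->
  charf A (w + s) = charf A w * Phi A w s.
Proof.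
move=> nz; rewrite /Phi /charf /resolv -det_mulmx mulmxDr mulmx1 -scalemxAr.
rewrite mulmxV; last by rewrite unitmxE unitfE.
by rewrite scalemx1 (raddfD (@scalar_mx _ n)) addrAC.
Qed.

Definition psi (x : R) : R := atan (sin x / (1 + cos x)) *+ 2.

Lemma sin_atan' (t : R) : sin (atan t) = t * cos (atan t).
Proof.
have cpos : 0 < cos (atan t) by apply: cos_gt0_pihalf; rewrite atan_gtNpi2 atan_ltpi2.
by rewrite -{2}[t]atanK /tan divfK // lt0r_neq0.
Qed.

Lemma cos2_atan (t : R) : cos (atan t) ^+ 2 = (1 + t ^+ 2)^-1.
Proof. by rewrite cos_atan exprVn sqr_sqrtr // addr_ge0 // sqr_ge0. Qed.

Lemma psi_cos_sin (x : R) : 1 + cos x != 0 -> cos (psi x) = cos x /\ sin (psi x) = sin x.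
Proof.
move=> nz; rewrite /psi mulr2n cosD sinD.
set t := sin x / (1 + cos x).
rewrite !sin_atan'.
have e1 : cos (atan t) * cos (atan t) = (1 + t ^+ 2)^-1 by rewrite -expr2 cos2_atan.
have hs : sin x ^+ 2 = 1 - cos x ^+ 2 by rewrite sin2cos2.
have tpos : 1 + t ^+ 2 != 0 by rewrite lt0r_neq0 // ltr_pwDl // sqr_ge0.
split.
- rewrite (_ : _ - _ = (1 - t ^+ 2) * (cos (atan t) * cos (atan t))); last by ring.
  rewrite e1 /t expr_div_n hs.
  field.
  rewrite nz /=; have -> : (1 + cos x) ^+ 2 + (1 - cos x ^+ 2) = (1 + cos x) * 2 by ring.
  by rewrite mulf_eq0 negb_or nz pnatr_eq0.
- rewrite (_ : _ + _ = (t *+ 2) * (cos (atan t) * cos (atan t))); last by ring.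
  rewrite e1 /t expr_div_n hs.
  field.
  rewrite nz /=; have -> : (1 + cos x) ^+ 2 + (1 - cos x ^+ 2) = (1 + cos x) * 2 by ring.
  by rewrite mulf_eq0 negb_or nz pnatr_eq0.
Qed.

Lemma psi_bound (x : R) : - pi < psi x < pi.
Proof.
have h1 := atan_gtNpi2 (sin x / (1 + cos x)).
have h2 := atan_ltpi2 (sin x / (1 + cos x)).
rewrite /psi mulr2n; lra.
Qed.

Lemma psi_cont (x : R) : 1 + cos x != 0 -> {for x, continuous psi}.
Proof.
move=> nz.
have h1 : (fun y => sin y / (1 + cos y)) @ x --> sin x / (1 + cos x).
  apply: cvgM; first exact: continuous_sin.
  apply: cvgV => //; apply: cvgD; [exact: cvg_cst | exact: continuous_cos].
have h2 := continuous_comp h1 (@continuous_atan R (sin x / (1 + cos x))).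
exact (cvgMn (n := 2) h2).
Qed.

Definition polar (r x : R) : C := (r * cos x) +i* (r * sin x).

Lemma cmod_polar (r x : R) : 0 <= r -> cmod (polar r x) = r.
Proof.
by move=> r0; rewrite /cmod /polar /= !exprMn -mulrDr cos2Dsin2 mulr1 sqrtr_sqr ger0_norm.
Qed.

Lemma Arg_polar (r x : R) : 0 < r -> - pi < x < pi -> Arg (polar r x) = x.
Proof.
move=> r0 /andP[h1 h2]; rewrite /Arg (@cmod_polar r x (ltW r0)) /polar /=.
rewrite mulrAC divff ?lt0r_neq0 // mul1r.
case: ifPn => hs.
  have x0 : 0 <= x.
    rewrite leNgt; apply/negP => xn.
    have : 0 < sin (- x) by apply: sin_gt0_pi; lra.
    rewrite sinN; move: hs; rewrite pmulr_rge0 //; lra.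
  by rewrite cosK // in_itv /= x0 ltW.
have x0 : x < 0.
  rewrite ltNge; apply/negP => xn.
  have : 0 <= sin x by apply: sin_ge0_pi; lra.
  move: hs; rewrite pmulr_rge0 //; lra.
by rewrite cosKN ?opprK //; lra.
Qed.

Lemma Arg_pi (r x : R) : 0 < r -> cos x = -1 -> Arg (polar r x) = pi.
Proof.
move=> r0 cx.
have sx : sin x = 0.
  have := cos2Dsin2 x; rewrite cx sqrrN expr1n => h.
  have /eqP : sin x ^+ 2 = 0 by lra.
  by rewrite sqrf_eq0 => /eqP.
rewrite /Arg (@cmod_polar r x (ltW r0)) /polar /= sx mulr0 lexx cx mulrN1 mulNr divff ?lt0r_neq0 //.
exact: acosN1.
Qed.

Lemma polar_mul (r1 r2 x y : R) : polar r1 x * polar r2 y = polar (r1 * r2) (x + y).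
Proof.
rewrite /polar cosD sinD; apply/eqP; rewrite eq_complex /=; apply/andP; split; apply/eqP; ring.
Qed.

Lemma polar_div (a b p : C) (ra rb al be : R) :
  a = polar ra al -> b = polar rb be -> b != 0 -> a = b * p ->
  p = polar (ra / rb) (al - be).
Proof.
move=> -> -> bnz e.
have rbnz : rb != 0.
  apply/negP => /eqP r0; move: bnz; rewrite r0 /polar !mul0r.
  by rewrite eq_complex /= eqxx.
apply: (mulfI bnz); rewrite -e polar_mul mulrC divfK //.
by rewrite addrC subrK.
Qed.

Lemma cos1_zero (v : R) : cos v = 1 -> - pi < v < pi -> v = 0.
Proof.
move=> cv /andP[h1 h2]; have [v0|v0] := leP 0 v.
  by rewrite -[v]cosK ?cv ?acos1 // in_itv /= v0 ltW.
have := cosKN (x:=v); rewrite cv acos1 => h; have := h ltac:(lra); lra.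
Qed.

Lemma const_lemma (G : R -> R) (a b t1 t2 : R) : a <= b ->
  {within `[a, b], continuous G} ->
  (forall s, a <= s <= b -> cos (G s) = 1) ->
  (t1 = a /\ t2 = b) \/ (t1 = b /\ t2 = a) ->
  G t1 = 0 -> G t2 = 0.
Proof.
move=> ab Gc Gcos ht G1.
have t2I : a <= t2 <= b by case: ht => -[_ ->]; rewrite lexx ab.
have cv := Gcos _ t2I.
have [hlt|hge] := boolP (- pi < G t2 < pi); first exact: cos1_zero.
exfalso.
have hab : (G a = 0 /\ G b = G t2) \/ (G b = 0 /\ G a = G t2).
  by case: ht => -[<- <-]; [left|right].
have pi0 := pi_gt0 R.
have [vp|vn] : pi <= G t2 \/ G t2 <= - pi.
  move: hge; rewrite negb_and -!leNgt => /orP[]; [right|left] => //.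
- have [c cI Gc'] : exists2 c, c \in `[a, b]%R & G c = pi.
    apply: IVT => //; case: hab => -[-> ->]; rewrite /Order.min /Order.max; case: ifP => ?; apply/andP; lra.
  move: cI; rewrite in_itv /= => cI.
  by have := Gcos _ cI; rewrite Gc' cospi; lra.
- have [c cI Gc'] : exists2 c, c \in `[a, b]%R & G c = - pi.
    apply: IVT => //; case: hab => -[-> ->]; rewrite /Order.min /Order.max; case: ifP => ?; apply/andP; lra.
  move: cI; rewrite in_itv /= => cI.
  by have := Gcos _ cI; rewrite Gc' cosN cospi; lra.
Qed.
End S.

Theorem lemma1 (R : realType) (n : nat) (A : 'M[R[i]]_n)
    (gamma : R -> R[i]) (theta : R -> R) (z h : R[i]) (t1 t2 : R) :
  jordan_curve gamma ->
  (forall t, 0 <= t <= 1 -> ~~ eigenvalue A (gamma t)) ->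
  cont_arg (charf A) gamma theta ->
  theta 0 = Arg (charf A (gamma 0)) ->
  0 <= t1 < 1 -> 0 <= t2 < 1 ->
  gamma t1 = z -> gamma t2 = z + h ->
  gamma @` `[Order.min t1 t2, Order.max t1 t2] =
    [set z + (u : R)%:C * h | u in `[0 : R, 1]] ->
  (forall u : R, 0 <= u <= 1 -> `|Arg (Phi A z (u%:C * h))| < pi) ->
  theta t2 = theta t1 + Arg (Phi A z h).
Proof.
move=> Hj Hev [Hcont Hpol] _ /andP[t10 t11] /andP[t20 t21] Hz Hzh Himg Hphi.
set a := Order.min t1 t2; set b := Order.max t1 t2.
have [ab a0 b1 habc] : [/\ a <= b, 0 <= a, b < 1 &
    (t1 = a /\ t2 = b) \/ (t1 = b /\ t2 = a)].
  rewrite /a /b /Order.min /Order.max; case: ifPn => h12.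
    by split; [lra|lra|lra|left].
  by rewrite -leNgt in h12; split; [lra|lra|lra|right].
set f := charf A.
have nz t : 0 <= t <= 1 -> f (gamma t) != 0 by move=> ht; exact: charf_neq0 (Hev t ht).
have Hp t : 0 <= t <= 1 -> f (gamma t) = polar (cmod (f (gamma t))) (theta t) := Hpol t.
have rpos t : 0 <= t <= 1 -> 0 < cmod (f (gamma t)).
  move=> ht; rewrite lt_neqAle sqrtr_ge0 andbT; apply/negP => /eqP r0.
  move: (nz t ht); rewrite (Hp t ht) -r0 /polar !mul0r; by rewrite eqxx.
have t1I : 0 <= t1 <= 1 by lra.
set c := theta t1.
have Phif t s : 0 <= t <= 1 -> gamma t = z + s ->
    Phi A z s = polar (cmod (f (gamma t)) / cmod (f (gamma t1))) (theta t - c).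
  move=> ht hg; apply: (polar_div (Hp t ht) (Hp t1 t1I) (nz t1 t1I)).
  rewrite hg Hz /f charf_factor // -Hz; exact: nz.
have sI01 s : a <= s <= b -> 0 <= s <= 1 by move=> /andP[? ?]; lra.
have ncos s : a <= s <= b -> 1 + cos (theta s - c) != 0.
  move=> sI; have [u /= uI eu] : [set z + (u : R)%:C * h | u in `[0 : R, 1]] (gamma s).
    by rewrite -Himg; exists s => //=; rewrite in_itv /=.
  move: uI; rewrite in_itv /= => uI.
  have := Hphi u uI; rewrite (Phif s _ (sI01 s sI) (esym eu)).
  apply: contraTN => /eqP hc.
  rewrite Arg_pi; first by rewrite ger0_norm ?ltxx // ltW // pi_gt0.
    by apply: divr_gt0; apply: rpos => //; exact: sI01.
  lra.
pose G s := (theta s - c) - psi (theta s - c).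
have Gcos s : a <= s <= b -> cos (G s) = 1.
  move=> sI; have [pc ps] := psi_cos_sin (ncos s sI).
  by rewrite /G cosD cosN sinN pc ps mulrN opprK -!expr2 cos2Dsin2.
have G1 : G t1 = 0.
  by rewrite /G /c subrr /psi sin0 mul0r atan0 mul0rn subrr.
have Gc : {within `[a, b], continuous G}.
  rewrite continuous_subspace_in => s.
  rewrite inE /= in_itv /= => sI.
  have nzc := ncos s sI.
  have thc : {for s, continuous (theta : subspace `[a, b] -> R)}.
    apply: (continuous_subspaceW _ Hcont).
    move=> x /=; rewrite !in_itv /= => /andP[? ?]; apply/andP; lra.
  have hs : (fun y => y - c) @ theta s --> theta s - c.
    apply: cvgB; [exact: cvg_id | exact: cvg_cst].
  have Hc : {for theta s, continuous (fun y => (y - c) - psi (y - c))}.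
    apply: cvgB; first exact: hs.
    exact: (continuous_comp hs (psi_cont nzc)).
  exact: (continuous_comp thc Hc).
have G2 := const_lemma ab Gc Gcos habc G1.
have t2I : 0 <= t2 <= 1 by lra.
have t2ab : a <= t2 <= b by case: habc => -[_ ->]; rewrite lexx ab.
rewrite (Phif t2 h t2I Hzh) Arg_polar.
- by rewrite addrC subrK.
- by apply: divr_gt0; apply: rpos.
- have e : theta t2 - c = psi (theta t2 - c) by move: G2; rewrite /G => /eqP; rewrite subr_eq0 => /eqP.
  by rewrite e psi_bound.
Qed.
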